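(* (1) If $L\subseteq A^*$ is accepted by a nondeterministic finite automaton having depth $m$, then ${\uparrow}L$ is $m$-PT while ${\uparrow}_<L$ and $\min(L)$ are $(m+1)$-PT. (2) The same conclusions hold if $L$ is accepted by a context-free grammar, with $m=\ell^N$, where $N$ is the number of nonterminal symbols and $\ell$ is the maximum length of the right-hand sides of the production rules.
   Context: The depth of an automaton is the maximum length of a simple (non-repeating) path from an initial state to some final state. $u\sqsubseteq v$ (subword) means $u=a_1\cdots a_n$ with letters $a_i$ and $v=v_0a_1v_1\cdots a_nv_n$; $u\sqsubset v$ means $u\sqsubseteq v$ and $u\ne v$. ${\uparrow}L=\{v~|~\exists u\in L: u\sqsubseteq v\}$, ${\uparrow}_<L=\{v~|~\exists u\in L:u\sqsubset v\}$, $\min(L)=\{u\in L~|~\forall v\in L: v\not\sqsubset u\}$. $u\sim_n v$ iff $u,v$ have the same subwords of length at most $n$; $L$ is $n$-PT if it is a union of $\sim_n$-classes. *)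

(* Defs.v *)
From mathcomp Require Import all_boot.
Set Implicit Arguments. Unset Strict Implicit. Unset Printing Implicit Defensive.

(* Words over a finite alphabet A are [seq A]; the subword (scattered
   subsequence) order u ⊑ v is MathComp's [subseq u v]. Languages are
   predicates [seq A -> Prop]. *)

Section Words.
Variable A : finType.

Definition language := seq A -> Prop.

Definition strict_subword (u v : seq A) : Prop := subseq u v /\ u <> v.

Definition upward (L : language) : language :=
  fun v => exists u, L u /\ subseq u v.
Definition strict_upward (L : language) : language :=
  fun v => exists u, L u /\ strict_subword u v.
Definition minimal (L : language) : language :=
  fun u => L u /\ forall v, L v -> ~ strict_subword v u.

Definition simeq (n : nat) (u v : seq A) : Prop :=
  forall w : seq A, size w <= n -> subseq w u = subseq w v.

(* L is n-PT : a union of ~_n-classes, i.e. closed under ~_n *)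
Definition PT (n : nat) (L : language) : Prop :=
  forall u v, simeq n u v -> (L u <-> L v).
End Words.

Record nfa (A : finType) := NFA {
  nfa_state : finType;
  nfa_init : {set nfa_state};
  nfa_final : {set nfa_state};
  nfa_trans : nfa_state -> A -> nfa_state -> bool }.

Section NFA.
Variables (A : finType) (M : nfa A).

Fixpoint nfa_run (q : nfa_state M) (w : seq A) : bool :=
  match w with
  | [::] => q \in nfa_final M
  | a :: w' => [exists q' : nfa_state M, nfa_trans q a q' && nfa_run q' w']
  end.

Definition nfa_lang : language A :=
  fun w => exists2 q, q \in nfa_init M & nfa_run q w.

Definition nfa_edge (p q : nfa_state M) : bool := [exists a : A, nfa_trans p a q].

(* a simple (non-repeating) path q0 q1 ... qk from an initial to a final state;
   its length is k = size p *)
Definition simple_path (q0 : nfa_state M) (p : seq (nfa_state M)) : Prop :=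
  [/\ q0 \in nfa_init M, last q0 p \in nfa_final M,
      path nfa_edge q0 p & uniq (q0 :: p)].

Definition nfa_depth (m : nat) : Prop :=
  (exists q0 p, simple_path q0 p /\ size p = m) /\
  (forall q0 p, simple_path q0 p -> size p <= m).
End NFA.

Record cfg (A : finType) := CFG {
  cfg_nonterm : finType;
  cfg_start : cfg_nonterm;
  cfg_rules : seq (cfg_nonterm * seq (A + cfg_nonterm)) }.

Section CFG.
Variables (A : finType) (G : cfg A).

Inductive gen : (A + cfg_nonterm G) -> seq A -> Prop :=
| gen_term (a : A) : gen (inl a) [:: a]
| gen_rule (X : cfg_nonterm G) (rhs : seq (A + cfg_nonterm G)) (w : seq A) :
    (X, rhs) \in cfg_rules G -> gens rhs w -> gen (inr X) w
with gens : seq (A + cfg_nonterm G) -> seq A -> Prop :=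
| gens_nil : gens [::] [::]
| gens_cons s ss w ws : gen s w -> gens ss ws -> gens (s :: ss) (w ++ ws).

Definition cfg_lang : language A := gen (inr (cfg_start G)).

Definition cfg_maxrhs : nat := \max_(r <- cfg_rules G) size r.2.
Definition cfg_bound : nat := cfg_maxrhs ^ #|cfg_nonterm G|.
End CFG.

(* Main.v *)
Require Import Defs.
From mathcomp Require Import all_boot.
From Stdlib Require Import Lia.
From mathcomp Require Import zify.
Set Implicit Arguments. Unset Strict Implicit. Unset Printing Implicit Defensive.

Section Generic.
Variable A : finType.
Implicit Types (L : language A) (u v w x : seq A).

Lemma subseq_step x u : subseq x u -> size x < size u ->
  exists w, [/\ subseq x w, subseq w u & size w = (size x).+1].
Proof.
elim: u x => [|a u IH] x //= sxu.
case: x sxu => [_ _|b x] /=.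
  by exists [:: a]; rewrite /= eqxx sub0seq.
case: eqP => [->|nba] sxu hs.
  have [w [h1 h2 h3]] := IH x sxu hs.
  by exists (a :: w); rewrite /= !eqxx h1 h2 h3.
case: (ltnP (size (b :: x)) (size u)) => h.
  have [w [h1 h2 h3]] := IH _ sxu h.
  by exists w; split => //; apply: subseq_trans h2 (subseq_cons u a).
have ebu : b :: x = u.
  by apply/eqP; rewrite -(size_subseq_leqif sxu).2 eqn_leq size_subseq // h.
exists (a :: u); split => //; last by rewrite -ebu.
  exact: subseq_trans sxu (subseq_cons u a).
by rewrite eqxx subseq_refl.
Qed.

Lemma simeq_sym n u v : simeq n u v -> simeq n v u.
Proof. by move=> H w hw; rewrite H. Qed.

Definition shortsub L m := forall w, L w -> exists x, [/\ subseq x w, L x & size x <= m].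

Lemma strict_size u v : strict_subword u v -> size u < size v.
Proof.
move=> [s ne]; rewrite ltn_neqAle size_subseq // andbT.
by apply/negP => /eqP e; apply: ne; apply/eqP; rewrite -(size_subseq_leqif s).2 e.
Qed.

Lemma PT_gen L m : shortsub L m ->
  [/\ PT m (upward L), PT m.+1 (strict_upward L) & PT m.+1 (minimal L)].
Proof.
move=> K.
have up : forall u v, simeq m u v -> upward L u -> upward L v.
  move=> u v H [x [Lx sx]]; have [y [sy Ly hy]] := K _ Lx.
  by exists y; split => //; rewrite -H // (subseq_trans sy sx).
have st : forall u v, simeq m.+1 u v -> strict_upward L u -> strict_upward L v.
  move=> u v H [x [Lx [sx nx]]]; have [y [sy Ly hy]] := K _ Lx.
  have syu : strict_subword y u.
    split; first exact: subseq_trans sy sx.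
    move=> e; subst u; apply: nx; apply/eqP.
    by rewrite -(size_subseq_leqif sx).2 eqn_leq !size_subseq.
  have [w [h1 h2 h3]] := subseq_step syu.1 (strict_size syu).
  have wv : subseq w v by rewrite -H // h3.
  exists y; split => //; split; first exact: subseq_trans h1 wv.
  move=> e; subst v; move: (size_subseq wv); rewrite h3 ltnn //.
have mi : forall u v, simeq m.+1 u v -> minimal L u -> minimal L v.
  move=> u v H [Lu mu]; have [y [sy Ly hy]] := K _ Lu.
  have eyu : y = u.
    by case: (eqVneq y u) => // ne; exfalso; apply: (mu y Ly); split => //; exact/eqP.
  subst y.
  have uv : subseq u v by rewrite -H ?subseq_refl // (leqW hy).
  have svu : size v <= size u.
    rewrite leqNgt; apply/negP => lt.
    have : subseq (take (size u).+1 v) u.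
      by rewrite H ?take_subseq // size_takel.
    by move/size_subseq; rewrite size_takel // ltnn.
  have -> : v = u.
    by apply/eqP; rewrite eq_sym -(size_subseq_leqif uv).2 eqn_leq svu size_subseq.
  by split.
split => u v H; split; by [apply: up | apply: up; apply: simeq_sym
  | apply: st | apply: st; apply: simeq_sym | apply: mi | apply: mi; apply: simeq_sym].
Qed.
End Generic.

Section NFAp.
Variables (A : finType) (M : nfa A).
Notation Q := (nfa_state M).

Fixpoint runV (V : {set Q}) (q : Q) (w : seq A) : Prop :=
  q \notin V /\ match w with
  | [::] => q \in nfa_final M
  | a :: w' => exists q', nfa_trans q a q' /\ runV (q |: V) q' w' end.

Lemma runV_run V q w : runV V q w -> nfa_run q w.
Proof.
elim: w V q => [|a w IH] V q [qV h] //=.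
case: h => q' [t r]; apply/existsP; exists q'; rewrite t /=; exact: IH r.
Qed.

Lemma runV_path V q w : runV V q w -> exists p, [/\ size p = size w,
  path (@nfa_edge _ M) q p, last q p \in nfa_final M, uniq (q :: p)
  & all (fun r => r \notin V) (q :: p)].
Proof.
elim: w V q => [|a w IH] V q [qV h].
  by exists [::]; rewrite /= qV.
case: h => q' [t r]; have [p [h1 h2 h3 h4 h5]] := IH _ _ r.
exists (q' :: p); split => //=; first by rewrite h1.
- by rewrite h2 andbT; apply/existsP; exists a.
- move: h4 => /= /andP[-> ->]; rewrite !andbT; apply/negP => qin.
  by move/allP: h5 => /(_ q qin); rewrite setU11.
- rewrite qV /=; apply/andP; split.
    by move: h5 => /= /andP[+ _]; rewrite in_setU1 negb_or => /andP[].
  apply/allP => z zin; move: h5 => /= /andP[_ /allP /(_ z zin)].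
  by rewrite in_setU1 negb_or => /andP[].
Qed.

Lemma pump n : forall w, size w <= n -> forall V q, nfa_run q w ->
  (exists w', subseq w' w /\ runV V q w') \/
  (exists y, y \in V /\ exists w', subseq w' w /\ nfa_run y w').
Proof.
elim: n => [|n IH] w hw V q hr; case: (boolP (q \in V)) => qV.
- by right; exists q; split => //; exists w; rewrite subseq_refl.
- case: w hw hr => // _ hr; left; exists [::]; split => //.
- by right; exists q; split => //; exists w; rewrite subseq_refl.
case: w hw hr => [_ hr|a w hw /existsP [q' /andP [t hr]]].
  by left; exists [::]; split.
have [[w1 [s1 r1]]|[y [yin [w1 [s1 r1]]]]] := IH w hw (q |: V) q' hr.
  left; exists (a :: w1); split; first by rewrite /= eqxx.
  by split => //; exists q'.
have sw : subseq w (a :: w) := subseq_cons w a.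
case: (eqVneq y q) => [eyq|nyq].
  subst y.
  have hw1 : size w1 <= n := leq_trans (size_subseq s1) hw.
  have [[w2 [s2 r2]]|[y2 [y2in [w2 [s2 r2]]]]] := IH w1 hw1 V q r1.
    by left; exists w2; split => //; apply: subseq_trans s2 (subseq_trans s1 sw).
  by right; exists y2; split => //; exists w2; split => //;
    apply: subseq_trans s2 (subseq_trans s1 sw).
right; exists y; split.
  by move: yin; rewrite in_setU1 (negbTE nyq).
by exists w1; split => //; apply: subseq_trans s1 sw.
Qed.

Lemma nfa_short m : nfa_depth M m -> shortsub (nfa_lang M) m.
Proof.
move=> [_ hm] w [q0 q0i hr].
have [[w1 [s1 r1]]|[y [yin _]]] := pump (leqnn (size w)) set0 hr; last by rewrite in_set0 in yin.
exists w1; split => //; first by exists q0 => //; exact: runV_run r1.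
have [p [h1 h2 h3 h4 _]] := runV_path r1.
by rewrite -h1; apply: (hm q0); split.
Qed.
End NFAp.

Section CFGp.
Variables (A : finType) (G : cfg A).
Notation N := (cfg_nonterm G).
Notation sym := (A + N)%type.

Fixpoint gl (P : sym -> seq A -> Prop) (r : seq sym) (w : seq A) : Prop :=
  match r with
  | [::] => w = [::]
  | s :: ss => exists w1 w2, [/\ w = w1 ++ w2, P s w1 & gl P ss w2]
  end.

Fixpoint genb (n : nat) (s : sym) (w : seq A) {struct n} : Prop :=
  match s with
  | inl a => w = [:: a]
  | inr X => match n with
             | 0 => False
             | n'.+1 => exists2 rhs, (X, rhs) \in cfg_rules G & gl (genb n') rhs w
             end
  end.

Lemma gl_mono (P P' : sym -> seq A -> Prop) r w :
  (forall s w, P s w -> P' s w) -> gl P r w -> gl P' r w.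
Proof.
move=> H; elim: r w => [|s r IH] w //= [w1 [w2 [-> h1 h2]]].
by exists w1, w2; split; [|apply: H|apply: IH].
Qed.

Lemma genb_mono n n' s w : n <= n' -> genb n s w -> genb n' s w.
Proof.
elim: n n' s w => [|n IH] [|n'] [a|X] w //= hn [rhs hr hg].
by exists rhs => //; apply: gl_mono hg => s' w'; apply: IH.
Qed.

Lemma genb_inl n a w : genb n (inl a) w -> w = [:: a].
Proof. by case: n. Qed.

Scheme gen_ind' := Induction for gen Sort Prop
  with gens_ind' := Induction for gens Sort Prop.

Lemma gen_genb s w : gen s w -> exists n, genb n s w.
Proof.
move=> h; apply: (@gen_ind' A G (fun s w _ => exists n, genb n s w)
  (fun r w _ => exists n, gl (genb n) r w)) h.
- by move=> a; exists 0.
- by move=> X rhs w0 hr _ [n hn]; exists n.+1; exists rhs.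
- by exists 0.
- move=> s0 ss w0 ws _ [n1 h1] _ [n2 h2]; exists (maxn n1 n2); exists w0, ws; split => //.
    by apply: genb_mono h1; rewrite leq_maxl.
  by apply: gl_mono h2 => s1 w1; apply: genb_mono; rewrite leq_maxr.
Qed.

Inductive genV : {set N} -> sym -> seq A -> Prop :=
| gv_term (V : {set N}) a : genV V (inl a) [:: a]
| gv_rule (V : {set N}) (X : N) (rhs : seq sym) (w : seq A) : X \notin V -> (X, rhs) \in cfg_rules G ->
    gensV (X |: V) rhs w -> genV V (inr X) w
with gensV : {set N} -> seq sym -> seq A -> Prop :=
| gvs_nil (V : {set N}) : gensV V [::] [::]
| gvs_cons (V : {set N}) (s : sym) (ss : seq sym) (w ws : seq A) : genV V s w -> gensV V ss ws -> gensV V (s :: ss) (w ++ ws).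

Scheme genV_ind' := Induction for genV Sort Prop
  with gensV_ind' := Induction for gensV Sort Prop.

Lemma genV_gen V s w : genV V s w -> gen s w.
Proof.
move=> h; apply: (@genV_ind' (fun V s w _ => gen s w) (fun V r w _ => gens r w)) h.
- by move=> *; constructor.
- by move=> V0 X rhs w0 _ hr _ h; apply: gen_rule hr h.
- by move=> *; constructor.
- by move=> *; constructor.
Qed.

Definition ell := cfg_maxrhs G.

Lemma sum_le (r : seq sym) (f : sym -> nat) c :
  (forall s, s \in r -> f s <= c) -> \sum_(s <- r) f s <= size r * c.
Proof.
elim: r => [|s r IH] H; first by rewrite big_nil.
rewrite big_cons /= mulSn leq_add //; first by apply: H; rewrite mem_head.
by apply: IH => s' hs'; apply: H; rewrite inE hs' orbT.
Qed.

Lemma genV_bound V X w : genV V (inr X) w -> size w <= ell ^ #|~: V|.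
Proof.
move=> h.
pose bd (V : {set N}) (s : sym) := if s is inr _ then ell ^ #|~: V| else 1.
suff : size w <= bd V (inr X) by [].
apply: (@genV_ind' (fun V s w _ => size w <= bd V s)
  (fun V r w _ => size w <= \sum_(s <- r) bd V s)) h.
- by [].
- move=> V0 X0 rhs w0 XV hr _ hs /=.
  apply: leq_trans hs _.
  case: rhs hr => [|s0 r0] hr; first by rewrite big_nil.
  have hl : size (s0 :: r0) <= ell.
    by rewrite /ell /cfg_maxrhs; have := @leq_bigmax_seq _ (cfg_rules G) xpredT (fun r => size r.2) _ hr isT.
  have l1 : 0 < ell by apply: leq_trans hl.
  have c1 := cardsC V0; have c2 := cardsC (X0 |: V0); have c3 := cardsU1 X0 V0.
  rewrite XV /= in c3.
  have -> : #|~: V0| = #|~: (X0 |: V0)|.+1 by lia.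
  apply: leq_trans (sum_le (c := ell ^ #|~: (X0 |: V0)|) _) _.
    by move=> [a|Y] _ //=; rewrite expn_gt0 l1.
  by rewrite expnS leq_mul2r hl orbT.
- by [].
- move=> V0 s ss w0 ws _ h1 _ h2; rewrite size_cat big_cons; exact: leq_add.
Qed.

Lemma cpump n : forall V X w, genb n (inr X) w ->
  (exists2 w', subseq w' w & genV V (inr X) w') \/
  (exists y, y \in V /\ exists2 w', subseq w' w & genb n (inr y) w').
Proof.
elim: n => [|n IH] V X w //= [rhs hr hg].
case: (boolP (X \in V)) => XV.
  by right; exists X; split => //; exists w; [exact: subseq_refl | exists rhs].
have inner : forall r w, gl (genb n) r w ->
  (exists2 w', subseq w' w & gensV (X |: V) r w') \/
  (exists y, y \in X |: V /\ exists2 w', subseq w' w & genb n (inr y) w').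
  elim => [|s ss IHs] w0 /=.
    by move=> ->; left; exists [::] => //; constructor.
  move=> [w1 [w2 [-> h1 h2]]].
  have e1 : (exists2 w', subseq w' w1 & genV (X |: V) s w') \/
    (exists y, y \in X |: V /\ exists2 w', subseq w' w1 & genb n (inr y) w').
    case: s h1 => [a /genb_inl ->|Y h1]; first by left; exists [:: a]; [exact: subseq_refl|constructor].
    exact: IH.
  case: e1 => [[w1' s1 g1]|[y [yin [w1' s1 g1]]]].
    case: (IHs _ h2) => [[w2' s2 g2]|[y [yin [w2' s2 g2]]]].
      by left; exists (w1' ++ w2'); [exact: cat_subseq | constructor].
    by right; exists y; split => //; exists w2' => //; apply: subseq_trans s2 (suffix_subseq _ _).
  by right; exists y; split => //; exists w1' => //; apply: subseq_trans s1 (prefix_subseq _ _).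
case: (inner _ _ hg) => [[w' s' g']|[y [yin [w' s' g']]]].
  by left; exists w' => //; apply: gv_rule g'.
case: (eqVneq y X) => [eyX|nyX].
  subst y; case: (IH V X w' g') => [[w2 s2 g2]|[y2 [y2in [w2 s2 g2]]]].
    by left; exists w2 => //; apply: subseq_trans s2 s'.
  right; exists y2; split => //; exists w2; first exact: subseq_trans s2 s'.
  by exact: genb_mono (leqnSn n) g2.
right; exists y; split; first by move: yin; rewrite in_setU1 (negbTE nyX).
by exists w' => //; exact: genb_mono (leqnSn n) g'.
Qed.

Lemma cfg_short : shortsub (cfg_lang G) (cfg_bound G).
Proof.
move=> w hw; have [n hn] := gen_genb hw.
have [[w' s' g']|[y [yin _]]] := cpump set0 hn; last by rewrite in_set0 in yin.
exists w'; split => //; first exact: genV_gen g'.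
by have := genV_bound g'; rewrite setC0 cardsT.
Qed.
End CFGp.

Theorem theorem10 (A : finType) :
  (forall (M : nfa A) (m : nat), nfa_depth M m ->
     [/\ PT m (upward (nfa_lang M)),
         PT m.+1 (strict_upward (nfa_lang M)) &
         PT m.+1 (minimal (nfa_lang M))]) /\
  (forall (G : cfg A),
     [/\ PT (cfg_bound G) (upward (cfg_lang G)),
         PT (cfg_bound G).+1 (strict_upward (cfg_lang G)) &
         PT (cfg_bound G).+1 (minimal (cfg_lang G))]).
Proof.
split.
  by move=> M m hm; apply: PT_gen; apply: nfa_short.
by move=> G; apply: PT_gen; apply: cfg_short.
Qed.
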